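(* For all integers $p\ge 1$, $$E\,|C(p;\mathbf U_1)-C(p-1;\mathbf U_1)|\le 2.$$
   Context: Let $U_1,U_2,\ldots$ be i.i.d. uniform random variables on $[0,1]$ and $\mathbf U_k=(U_k,U_{k+1},\ldots)$ for $k\ge1$. Define $C(n;\mathbf U_k)$ for integers $n\ge0$ and $k\ge1$ recursively by $C(0;\mathbf U_k)=0$ and $C(n;\mathbf U_k)=n-1+C(\lfloor nU_k\rfloor;\mathbf U_{k+1})$ for $n\ge1$. (This is the number of comparisons made by Quickselect to find the minimum of $n$ distinct numbers.) *)

(* Defs.v *)
From HB Require Import structures.
From mathcomp Require Import all_boot all_order all_algebra.
From mathcomp Require Import all_classical all_reals all_analysis.
Set Implicit Arguments. Unset Strict Implicit. Unset Printing Implicit Defensive.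
Import Order.TTheory GRing.Theory Num.Theory.
Local Open Scope classical_set_scope.
Local Open Scope ring_scope.

(* Quickselect comparison count with fuel:
   Cfuel f n k u = C(n; (u k, u (k+1), ...)) computed with at most f recursive calls.
   C(0;.) = 0,  C(n;U_k) = n-1 + C(floor(n U_k); U_{k+1}). *)
Fixpoint Cfuel {R : realType} (f n k : nat) (u : nat -> R) : nat :=
  match f with
  | 0 => 0
  | f'.+1 =>
    match n with
    | 0 => 0
    | n'.+1 => n' + Cfuel f' (Num.truncn (n%:R * u k)) k.+1 u
    end
  end.

(* Whenever all u_j lie in [0,1), floor(n u_k) < n so n levels of fuel suffice
   and C agrees with the recursive definition of the paper. *)
Definition C {R : realType} (n : nat) (u : nat -> R) (k : nat) : nat :=
  Cfuel n n k u.

Definition mutually_independent {d} {T : measurableType d} {R : realType}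
  (P : probability T R) (X : nat -> {RV P >-> R}) : Prop :=
  forall (s : seq nat) (B : nat -> set R),
    uniq s -> (forall i, measurable (B i)) ->
    P (\bigcap_(i in [set` s]) (X i @^-1` B i)) =
    (\prod_(i <- s) P (X i @^-1` B i))%E.

Definition uniform01 {d} {T : measurableType d} {R : realType}
  (P : probability T R) (X : {RV P >-> R}) : Prop :=
  forall B : set R, measurable B ->
    P (X @^-1` B) = (@lebesgue_measure R) (B `&` `[0%R, 1%R]).

(* Main.v *)
Require Import Defs.
From HB Require Import structures.
From mathcomp Require Import all_boot all_order all_algebra.
From mathcomp Require Import all_classical all_reals all_analysis.
From mathcomp Require Import ring lra zify.
From mathcomp Require Import measurable_realfun.
Import Order.TTheory GRing.Theory Num.Theory.
Local Open Scope classical_set_scope.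
Local Open Scope ring_scope.

Fixpoint Wv {R : realType} (f n : nat) : R :=
  match f with
  | 0 => 0
  | f'.+1 => if (1 < n)%N then
       1 + \sum_(2 <= j < n) (j%:R / (n%:R * (n.-1)%:R)) * Wv f' j
     else 0
  end.

Lemma sum_id_nat {R : realType} (n : nat) :
  (\sum_(0 <= j < n) (j%:R : R)) * 2 = n%:R * (n.-1)%:R.
Proof.
elim: n => [|n IH]; first by rewrite big_geq // !mul0r.
rewrite big_nat_recr //= mulrDl IH.
rewrite -!natrM -natrD; congr (_%:R); case: n {IH}=> [|n] /=; lia.
Qed.

Lemma Wv_ge0 {R : realType} f n : 0 <= (Wv f n : R).
Proof.
elim: f n => [|f IH] n /=; first by [].
case: ifP => // _; apply: addr_ge0 => //; apply: sumr_ge0 => j _.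
by apply: mulr_ge0 => //; apply: divr_ge0.
Qed.

Lemma Wv_le2 {R : realType} f n : (Wv f n : R) <= 2.
Proof.
elim: f n => [|f IH] n /=; first by [].
case: ifP => // n1.
have npos : 0 < (n%:R * (n.-1)%:R : R).
  apply: mulr_gt0; rewrite ltr0n; lia.
have -> : (2 : R) = 1 + 1 by [].
rewrite lerD2l.
apply: (le_trans (y := \sum_(2 <= j < n) (j%:R / (n%:R * (n.-1)%:R)) * 2)).
  apply: ler_sum => j _; apply: ler_wpM2l; last exact: IH.
  by apply: divr_ge0.
rewrite -big_distrl /= -big_distrl /= mulrAC.
have h : \sum_(2 <= i < n) (i%:R : R) <= \sum_(0 <= i < n) (i%:R : R).
  rewrite (@big_cat_nat _ _ _ 2 0 n) //=.
  by rewrite lerDr; apply: sumr_ge0.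
apply: (le_trans (y := (\sum_(0 <= i < n) (i%:R : R)) * 2 * (n%:R * (n.-1)%:R)^-1)).
  apply: ler_wpM2r; first by rewrite invr_ge0 ltW.
  by apply: ler_wpM2r.
by rewrite sum_id_nat mulfV // lt0r_neq0.
Qed.


Definition good {R : realType} (u : nat -> R) := forall i, 0 <= u i < 1.

Lemma trunc_lt {R : realType} (n : nat) (x : R) : (0 < n)%N -> 0 <= x < 1 ->
  (Num.truncn (n%:R * x) < n)%N.
Proof.
move=> n0 /andP[x0 x1].
rewrite truncn_lt_nat; last by apply: mulr_ge0.
by rewrite -{2}(mulr1 n%:R) ltr_pM2l // ltr0n.
Qed.

Lemma trunc_diff {R : realType} (n : nat) (x : R) : 0 <= x < 1 ->
  (Num.truncn (n%:R * x) <= Num.truncn (n.+1%:R * x) <= (Num.truncn (n%:R * x)).+1)%N.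
Proof.
move=> /andP[x0 x1]; apply/andP; split.
  by apply: le_truncn; apply: ler_wpM2r => //; rewrite ler_nat.
rewrite truncn_le_nat.
have := truncnS_gt (n%:R * x).
move=> h.
rewrite -addn1 natrD mulrDl mul1r -[(_).+2]addn1 [X in _ < X]natrD.
exact: ltrD.
Qed.

Lemma Cfuel_ad2 {R : realType} (u : nat -> R) : good u ->
  forall f g n k, (n <= f)%N -> (n <= g)%N -> Cfuel f n k u = Cfuel g n k u.
Proof.
move=> gu; elim=> [|f IH] g n k nf ng; first by case: n nf ng => // _ _; case: g.
case: n nf ng => [|n] nf ng; first by case: g {ng} => [|g].
case: g ng => [|g] ng //=.
have ht := @trunc_lt _ n.+1 (u k) isT (gu k).
congr (_ + _)%N; apply: IH; lia.
Qed.

Lemma Cfuel_ad {R : realType} (u : nat -> R) : good u ->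
  forall f n k, (n <= f)%N -> Cfuel f n k u = Cfuel n n k u.
Proof. by move=> gu f n k nf; apply: Cfuel_ad2. Qed.

Lemma C_S {R : realType} (u : nat -> R) k n : good u ->
  C n.+1 u k = (n + C (Num.truncn (n.+1%:R * u k)) u k.+1)%N.
Proof.
move=> gu; rewrite /C /=; congr (_ + _)%N.
apply: Cfuel_ad => //.
have := @trunc_lt _ n.+1 (u k) isT (gu k); lia.
Qed.

Definition Iset {R : realType} (n j : nat) : set R :=
  `[ (j%:R / n%:R), (j%:R / (n.-1)%:R) [.

Fixpoint Dv {R : realType} (f n k : nat) (u : nat -> R) : R :=
  match f with
  | 0 => 0
  | f'.+1 => if (1 < n)%N then
       1 + \sum_(2 <= j < n) \1_(Iset n j) (u k) * Dv f' j k.+1 u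
     else 0
  end.

Lemma indic_I {R : realType} (n j : nat) (x : R) : (1 < n)%N -> 0 <= x < 1 ->
  \1_(Iset n j) x = (((j <= Num.truncn (n%:R * x)) && (Num.truncn (n.-1%:R * x) < j))%N%:R : R).
Proof.
move=> n1 /andP[x0 x1]; rewrite indicE; congr (_%:R).
rewrite /Iset mem_setE in_itv /=.
rewrite truncn_ge_nat; last by apply: mulr_ge0.
rewrite truncn_lt_nat; last by apply: mulr_ge0.
rewrite ler_pdivrMr ?ltr0n; last by lia.
rewrite ltr_pdivlMr ?ltr0n; last by lia.
by rewrite ![x * _]mulrC.
Qed.

Lemma sum_pick {R : realType} (F : nat -> R) a b m :
  \sum_(a <= j < b) ((j == m)%:R * F j) = if (a <= m < b)%N then F m else 0.
Proof.
elim: b => [|b IH]; first by rewrite big_geq // ltn0 andbF.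
case: (leqP a b) => ab.
  rewrite big_nat_recr //= IH.
  case: (eqVneq b m) => [<-|bm].
    by rewrite ltnn andbF ab ltnSn add0r mul1r.
  rewrite mul0r addr0.
  have -> : (m < b.+1)%N = (m < b)%N by rewrite ltnS leq_eqVlt eq_sym (negbTE bm).
  by [].
rewrite big_geq //; case: ifP => //; move=> /andP[]; lia.
Qed.

Lemma C0 {R : realType} (u : nat -> R) k : C 0 u k = 0%N.
Proof. by []. Qed.

Lemma C1 {R : realType} (u : nat -> R) k : good u -> C 1 u k = 0%N.
Proof.
move=> gu; rewrite (C_S _ _ _ gu).
have := @trunc_lt _ 1 (u k) isT (gu k).
by case: (Num.truncn _).
Qed.

Lemma Dv_eq {R : realType} (u : nat -> R) : good u ->
  forall f n k, (1 <= n)%N -> (n <= f)%N ->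
  (C n u k)%:R - (C n.-1 u k)%:R = Dv f n k u.
Proof.
move=> gu; elim=> [|f IH] n k n1 nf; first by lia.
case: n n1 nf => [|[|n]] n1 nf //.
  by rewrite /= C1 // C0 subrr.
rewrite /= !(C_S _ _ _ gu).
set m := Num.truncn (n.+2%:R * u k).
set m' := Num.truncn (n.+1%:R * u k).
have hd := @trunc_diff _ n.+1 (u k) (gu k).
have hm := @trunc_lt _ n.+2 (u k) isT (gu k).
rewrite -/m -/m' in hd hm.
under eq_bigr => j _ do rewrite (@indic_I _ n.+2 j (u k) isT (gu k)) /= -/m -/m'.
have -> : ((n.+1 + C m u k.+1)%N%:R - (n + C m' u k.+1)%N%:R : R) =
   1 + ((C m u k.+1)%:R - (C m' u k.+1)%:R).
  by rewrite !natrD -(addn1 n) natrD; ring.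
congr (1 + _).
have [e|e] : m = m' \/ m = m'.+1 by lia.
  rewrite e subrr big1 // => j _; by rewrite ltnNge andbN mul0r.
under eq_bigr => j _ do rewrite e -eqn_leq.
rewrite sum_pick e.
have [m0|m0] : m' = 0%N \/ (1 <= m')%N by lia.
  by rewrite m0 /= C1 // C0 subrr.
rewrite ifT; last by lia.
rewrite -IH //; lia.
Qed.


Lemma Dv_ge0 {R : realType} f n k (u : nat -> R) : 0 <= Dv f n k u.
Proof.
elim: f n k => [|f IH] n k //=; case: ifP => // _.
apply: addr_ge0 => //; apply: sumr_ge0 => j _; apply: mulr_ge0 => //.
Qed.

Lemma mIset {R : realType} n j : measurable (Iset n j : set R).
Proof. exact: measurable_itv. Qed.

Lemma mDv {R : realType} d (T : measurableType d) (P : probability T R)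
  (U : nat -> {RV P >-> R}) f n k :
  measurable_fun setT (fun w => Dv f n k (fun i => U i w)).
Proof.
elim: f n k => [|f IH] n k /=; first exact: measurable_cst.
case: (1 < n)%N; last exact: measurable_cst.
apply: measurable_funD; first exact: measurable_cst.
apply: measurable_sum => j; apply: measurable_funM; last exact: IH.
change (measurable_fun setT ((\1_(Iset n j) : R -> R) \o (U k))).
apply: measurableT_comp; last exact: measurable_funPT.
exact: measurable_indic (mIset n j).
Qed.

Definition Aset {R : realType} {d} {T : measurableType d} {P : probability T R}
  (U : nat -> {RV P >-> R}) (s : seq nat) (B : nat -> set R) : set T :=
  \bigcap_(i in [set` s]) (U i @^-1` B i).

Lemma mAset {R : realType} d (T : measurableType d) (P : probability T R)
  (U : nat -> {RV P >-> R}) s B : (forall i, measurable (B i)) ->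
  measurable (Aset U s B).
Proof.
move=> mB; apply: bigcap_measurableType => i _.
exact: measurable_funPTI.
Qed.

Lemma Aset_cons {R : realType} d (T : measurableType d) (P : probability T R)
  (U : nat -> {RV P >-> R}) s B k (I : set R) : k \notin s ->
  Aset U (k :: s) (fun i => if i == k then I else B i) = Aset U s B `&` U k @^-1` I.
Proof.
move=> ks; apply/seteqP; split => w.
  move=> H; split.
    move=> i /= iS; have := H i; rewrite /= in_cons iS orbT => /(_ isT).
    by case: eqP => // ik; move: iS; rewrite ik (negbTE ks).
  by have := H k; rewrite /= in_cons eqxx /= => /(_ isT).
move=> [H1 H2] i /=; rewrite in_cons => /orP[/eqP ->|iS].
  by rewrite eqxx.
case: eqP => [ik|_]; first by move: iS; rewrite ik (negbTE ks).
exact: H1.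
Qed.

Lemma P_Aset_cons {R : realType} d (T : measurableType d) (P : probability T R)
  (U : nat -> {RV P >-> R}) (hind : mutually_independent U) s B k (I : set R) :
  uniq s -> all (fun i => i < k)%N s -> (forall i, measurable (B i)) -> measurable I ->
  P (Aset U (k :: s) (fun i => if i == k then I else B i)) =
  (P (U k @^-1` I) * P (Aset U s B))%E.
Proof.
move=> us sk mB mI.
have ks : k \notin s.
  apply/negP => /(allP sk); by rewrite ltnn.
rewrite /Aset hind /=; last by move=> i; case: (i == k).
  rewrite big_cons eqxx hind //; congr (_ * _)%E.
  rewrite big_seq_cond [in RHS]big_seq_cond; apply: eq_bigr => i /andP[iS _].
  by case: eqP => // ik; move: iS; rewrite ik (negbTE ks).
by rewrite ks us.
Qed.

Lemma P_Iset {R : realType} d (T : measurableType d) (P : probability T R)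
  (U : nat -> {RV P >-> R}) (hunif : forall k, uniform01 (U k)) k n j :
  (1 < n)%N -> (j < n)%N -> (0 < j)%N ->
  P (U k @^-1` Iset n j) = (j%:R / (n%:R * (n.-1)%:R))%:E.
Proof.
move=> n1 jn j0.
rewrite hunif; last exact: mIset.
have n0 : (0 < n%:R :> R) by rewrite ltr0n; lia.
have n10 : (0 < (n.-1)%:R :> R) by rewrite ltr0n; lia.
rewrite setIidl; last first.
  move=> x; rewrite /Iset /= !in_itv /= => /andP[h1 h2]; apply/andP; split.
    by apply: le_trans h1; apply: divr_ge0.
  apply/ltW/(lt_le_trans h2).
  by rewrite ler_pdivrMr // mul1r ler_nat; lia.
rewrite /Iset lebesgue_measure_itv /= lte_fin ifT; last first.
  rewrite ltr_pM2l ?ltr0n // ltf_pV2 ?posrE // ltr_nat; lia.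
rewrite -EFinD; congr EFin.
have -> : n%:R = (n.-1)%:R + 1 :> R by rewrite natr1 prednK //; lia.
field; apply/andP; split; apply: lt0r_neq0 => //; exact: addr_gt0.
Qed.

Lemma key {R : realType} d (T : measurableType d) (P : probability T R)
  (U : nat -> {RV P >-> R}) (hind : mutually_independent U)
  (hunif : forall k, uniform01 (U k)) :
  forall f n k s B, uniq s -> all (fun i => i < k)%N s ->
  (forall i, measurable (B i)) ->
  (\int[P]_(w in Aset U s B) (Dv f n k (fun i => U i w))%:E =
  P (Aset U s B) * (Wv f n)%:E)%E.
Proof.
elim=> [|f IH] n k s B us sk mB.
  by rewrite /= mule0 integral0_eq.
have mA : measurable (Aset U s B) by apply: mAset.
rewrite /=; case hn: (1 < n)%N; last by rewrite mule0 integral0_eq.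
under eq_integral => w _ do rewrite EFinD -sumEFin.
have mg j : measurable_fun setT
   (fun w => \1_(Iset n j) (U k w) * Dv f j k.+1 (fun i => U i w)).
  apply: measurable_funM; last exact: mDv.
  change (measurable_fun setT ((\1_(Iset n j) : R -> R) \o (U k))).
  apply: measurableT_comp; last exact: measurable_funPT.
  exact: measurable_indic (mIset n j).
have g0 j w : 0 <= \1_(Iset n j) (U k w) * Dv f j k.+1 (fun i => U i w).
  by apply: mulr_ge0; [rewrite indicE | exact: Dv_ge0].
rewrite ge0_integralD //; first last.
- apply: measurable_funTS.
  rewrite (_ : (fun x => _) = EFin \o (fun w => \sum_(2 <= j < n)
     (\1_(Iset n j) (U k w) * Dv f j k.+1 (fun i => U i w)))); last first.
    by apply/funext => w; rewrite /= sumEFin.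
  apply/measurable_EFinP; apply: measurable_sum => j; exact: mg.
- by move=> w _; rewrite sumEFin lee_fin; apply: sumr_ge0 => j _.
rewrite integral_cst // mul1e.
rewrite ge0_integral_sum //; first last.
- by move=> j w _; rewrite lee_fin.
- move=> j; apply: measurable_funTS; apply/measurable_EFinP; exact: mg.
have step j : (2 <= j < n)%N ->
  (\int[P]_(w in Aset U s B) (\1_(Iset n j) (U k w) * Dv f j k.+1 (fun i => U i w))%:E
   = ((j%:R / (n%:R * (n.-1)%:R))%:E * P (Aset U s B)) * (Wv f j)%:E)%E.
  move=> /andP[j2 jn].
  have ks : k \notin s by apply/negP => /(allP sk); rewrite ltnn.
  transitivity (\int[P]_(w in Aset U s B `&` U k @^-1` Iset n j)
                  (Dv f j k.+1 (fun i => U i w))%:E)%E.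
    rewrite integral_mkcondr; apply: eq_integral => w _.
    by rewrite epatch_indic /= -EFinM mulrC.
  rewrite -Aset_cons // IH //; last first.
  - by move=> i; case: (i == k) => //; exact: mIset.
  - by rewrite /= ltnSn /=; apply: sub_all sk => i /= ik; lia.
  - by rewrite /= ks us.
  rewrite P_Aset_cons //; last exact: mIset.
  rewrite P_Iset //; lia.
rewrite (eq_big_nat _ _ step).
have [r Pr] : exists r, P (Aset U s B) = r%:E.
  by exists (fine (P (Aset U s B))); rewrite fineK // fin_num_measure.
rewrite Pr.
under eq_bigr do rewrite -!EFinM.
rewrite [X in (X + _)%E = _]Pr.
rewrite sumEFin -EFinD -EFinM; congr EFin.
rewrite mulrDr mulr1 big_distrr /=; congr (_ + _).
by apply: eq_bigr => j _; ring.
Qed.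


Definition MF {d} {T : measurableType d} (h : T -> nat) :=
  forall m, measurable (h @^-1` [set m]).

Lemma MF_dep {d} {T : measurableType d} (t : T -> nat) (g : nat -> T -> nat) :
  MF t -> (forall m, MF (g m)) -> MF (fun w => g (t w) w).
Proof.
move=> mt mg v.
rewrite (_ : _ @^-1` _ = \bigcup_m (t @^-1` [set m] `&` g m @^-1` [set v])).
  by apply: bigcup_measurable => m _; apply: measurableI; [exact: mt | exact: mg].
apply/seteqP; split => w /=.
  by move=> h; exists (t w) => //.
by move=> [m _ [/= -> ->]].
Qed.

Lemma MF_cst {d} {T : measurableType d} (c : nat) : MF (fun _ : T => c).
Proof.
move=> m; have [->|cm] := eqVneq c m.
  by rewrite (_ : _ @^-1` _ = setT) //; apply/seteqP; split.
rewrite (_ : _ @^-1` _ = set0) //; apply/seteqP; split => w //=.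
by move=> e; move: cm; rewrite e eqxx.
Qed.

Lemma meas_lt {R : realType} (n j : nat) :
  measurable [set x : R | (Num.truncn (n%:R * x) < j)%N].
Proof.
case: j => [|i].
  by rewrite (_ : [set _ | _] = set0) //; apply/seteqP; split.
rewrite (_ : [set _ | _] = setT `&` ( *%R n%:R) @^-1` `]-oo, i.+1%:R[).
  by apply: mulrl_measurable => //; exact: measurable_itv.
apply/seteqP; split => x /=.
  by rewrite ltnS real_truncn_le_nat ?num_real // => h; split => //; rewrite in_itv.
by move=> [_]; rewrite in_itv /= ltnS real_truncn_le_nat ?num_real.
Qed.

Lemma MF_trunc {R : realType} d (T : measurableType d) (P : probability T R)
  (U : nat -> {RV P >-> R}) n k : MF (fun w => Num.truncn (n%:R * U k w)).
Proof.
move=> m.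
rewrite (_ : _ @^-1` _ = U k @^-1` ([set x : R | (Num.truncn (n%:R * x) < m.+1)%N]
    `\` [set x : R | (Num.truncn (n%:R * x) < m)%N])).
  by apply: measurable_funPTI; apply: measurableD; exact: meas_lt.
apply/seteqP; split => w /=.
  by move=> ->; split => //; rewrite ltnn.
by move=> [h1 /negP h2]; lia.
Qed.

Lemma MF_Cfuel {R : realType} d (T : measurableType d) (P : probability T R)
  (U : nat -> {RV P >-> R}) f n k : MF (fun w => Cfuel f n k (fun i => U i w)).
Proof.
elim: f n k => [|f IH] n k; first exact: MF_cst.
case: n => [|n]; first exact: MF_cst.
apply: (@MF_dep _ _ (fun w => Num.truncn (n.+1%:R * U k w))
   (fun m w => (n + Cfuel f m k.+1 (fun i => U i w))%N)).
  exact: MF_trunc.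
move=> m; apply: (@MF_dep _ _ _ (fun x _ => (n + x)%N)) => //.
move=> x; exact: MF_cst.
Qed.

Lemma MF_meas2 {R : realType} {d} {T : measurableType d} (h1 h2 : T -> nat)
  (G : nat -> nat -> \bar R) :
  MF h1 -> MF h2 -> measurable_fun setT (fun w => G (h1 w) (h2 w)).
Proof.
move=> m1 m2 _ Y mY; rewrite setTI.
rewrite (_ : _ @^-1` _ = \bigcup_a \bigcup_b
   (h1 @^-1` [set a] `&` h2 @^-1` [set b] `&` [set _ | Y (G a b)])).
  apply: bigcup_measurable => a _; apply: bigcup_measurable => b _.
  apply: measurableI; first exact: measurableI.
  case: (pselect (Y (G a b))) => H.
    by rewrite (_ : [set _ | _] = setT) //; apply/seteqP; split.
  by rewrite (_ : [set _ | _] = set0) //; apply/seteqP; split.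
apply/seteqP; split => w /=.
  by move=> h; exists (h1 w) => //; exists (h2 w).
by move=> [a _ [b _ [[/= -> ->]]]].
Qed.

Lemma Aset_nil {R : realType} d (T : measurableType d) (P : probability T R)
  (U : nat -> {RV P >-> R}) B : Aset U [::] B = setT.
Proof. by apply/seteqP; split => // w _ i. Qed.

Lemma bad_null {R : realType} d (T : measurableType d) (P : probability T R)
  (U : nat -> {RV P >-> R}) (hunif : forall k, uniform01 (U k)) k :
  P (U k @^-1` (~` `[0%R, 1%R[)) = 0%E.
Proof.
rewrite hunif; last by apply: measurableC; exact: measurable_itv.
rewrite (_ : _ `&` _ = [set 1%R]); first exact: lebesgue_measure_set1.
apply/seteqP; split => x /=.
  rewrite !in_itv /= => -[h1 /andP[h2 h3]].
  apply/eqP; rewrite eq_le h3 /=; apply: contrapT => h4; apply: h1.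
  by rewrite h2 /= ltNge; apply/negP.
move=> ->; rewrite !in_itv /= ler01 lexx /= ltxx; split => //.
Qed.


Theorem lemma2p4 (R : realType) (d : measure_display) (T : measurableType d)
  (P : probability T R) (U : nat -> {RV P >-> R})
  (hind : mutually_independent U) (hunif : forall k, uniform01 (U k))
  (p : nat) (hp : (1 <= p)%N) :
  (\int[P]_(w in setT)
     (`| (C p (fun k => U k w) 1)%:R - (C p.-1 (fun k => U k w) 1)%:R |%R)%:E
   <= 2%:E)%E.
Proof.
apply: (@le_trans _ _ (\int[P]_(w in setT) (Dv p p 1 (fun k => U k w))%:E)%E).
  apply: ae_ge0_le_integral => //.
  - apply: (@MF_meas2 R _ _ (fun w => C p (fun k => U k w) 1)
       (fun w => C p.-1 (fun k => U k w) 1) (fun a b => (`|a%:R - b%:R|)%:E)).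
      exact: MF_Cfuel.
    exact: MF_Cfuel.
  - by move=> w _; rewrite lee_fin; exact: Dv_ge0.
  - apply/measurable_EFinP; exact: mDv.
  have := @negligible_bigcup _ _ _ P (fun k => U k @^-1` (~` `[0%R, 1%R[)).
  have hneg : forall k, P.-negligible (U k @^-1` (~` `[0%R, 1%R[)).
    move=> k; exists (U k @^-1` (~` `[0%R, 1%R[)); split => //.
    - apply: measurable_funPTI; apply: measurableC; exact: measurable_itv.
    - exact: bad_null.
  move=> /(_ hneg) [N [mN PN sub]].
  exists N; split => //.
  move=> w /= Hn; apply: sub; apply: contrapT => Hnone; apply: Hn => _.
  have gu : good (fun k => U k w).
    move=> i; case: (boolP (0 <= U i w < 1)%R) => // hb; exfalso; apply: Hnone.
    by exists i => //=; rewrite in_itv /=; apply/negP.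
  by rewrite lee_fin (@Dv_eq _ _ gu p p 1) // ger0_norm //; exact: Dv_ge0.
have := @key _ _ _ P U hind hunif p p 1 [::] (fun _ => setT) isT isT (fun _ => measurableT).
rewrite Aset_nil => ->.
by rewrite probability_setT mul1e lee_fin; exact: Wv_le2.
Qed.
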